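(* Fix a deterministic adversary $A$, parameters $\varepsilon,\delta,t,k$, a database $S$ and an element $x'\in X$, and let $S'=S\cup\{x'\}$. For a database $T$ let $\mathcal B(T)\in\{\bot,\top\}^*$ be the answer vector of \texttt{ThresholdMonitor} on $T$ interacting with $A$. Let $\vec a=(a_1,a_2,\dots)$ be an outcome vector and $W=(w_1,w_2,\dots)$ a vector of values of the noises $w_i$ such that event $E_3$ (defined in the context, for the execution on $S$) occurs for $(\vec a,W)$. Let $i^*$ be the first time step at which $c_{i^*}(x')\geq k$ (counters computed along $\vec a$), let $I_{\rm top}$ be the set of time steps $i\leq i^*$ with $a_i=\top$, and let $W'$ be the vector with $w'_i=w_i-f_{\vec a,i}(x')$ for $i\in I_{\rm top}$ and $w'_i=w_i$ otherwise. Then $$\Pr[\mathcal B(S')=\vec a\mid W']\leq\Pr[\mathcal B(S)=\vec a\mid W]\leq\exp\left(\frac{75(k+1)\varepsilon}{\log\frac1\delta}+25\varepsilon\right)\Pr[\mathcal B(S')=\vec a\mid W],$$ where conditioning on $W$ (resp. $W'$) means fixing the noises $w_i$ to those values, so that probabilities are only over the noises $v_i$.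
   Context: $X$ is a data domain; databases are finite multisets of elements of $X$. For $f:X\to[0,1]$, $f(D)=\sum_{x\in D}f(x)$. $\mathrm{Lap}(b)$ has density $\frac{1}{2b}e^{-|x|/b}$. Algorithm \texttt{ThresholdMonitor}. Input: database $S$, parameters $\varepsilon,\delta,t,k$, adaptively chosen queries $f_i:X\to[0,1]$. Initialize $c(x)=0$ for all $x\in X$. Let $\Delta=\frac{1}{\varepsilon}\log\left(\frac{1}{\delta}\right)\log\left(\frac{1}{\varepsilon}\log\frac{1}{\delta}\right)$. In round $i$: sample independently $w_i\sim\mathrm{Lap}(10\Delta)$, $v_i\sim\mathrm{Lap}(\frac{1}{\varepsilon}\log\frac{1}{\delta})$; let $\overline{v}_i=\min\{v_i,\Delta\}$, $\hat f_i=f_i(S)+w_i+\overline{v}_i$ (current $S$). If $\hat f_i<t$ output $a_i=\bot$; else output $a_i=\top$, set $c(x)\leftarrow c(x)+f_i(x)$ for all $x\in X$, and delete from $S$ every $x$ with $c(x)\geq k$. Since $A$ is deterministic, the $i$th query is determined by the previous answers; $f_{\vec a,i}$ denotes the query $A$ chooses after seeing the first $i-1$ answers of $\vec a$. In the execution on $S$, $S_i$ is the database before the $i$th query and $c_i(\cdot)$ the counter after round $i$. Time step $i$ is an almost-top if $a_i=\bot$, $c_i(x')<k$ and $f_i(S_i)+w_i\geq t-2\Delta$; it is a special-almost-top if $a_i=\bot$, $c_i(x')<k$ and $t-f_i(x')-\Delta\leq f_i(S_i)+w_i<t-\Delta$. Event $E_1$: $\sum_{i\text{ almost-top}}f_i(x')\leq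 15(k+1)+5\log\frac1\delta$. Event $E_2$: the number of special-almost-tops is at most $30(k+1)+10\log\frac1\delta$. $E_3=E_1\wedge E_2$; it is determined by $\vec a$ and $W$. *)

(* Defs.v *)
From HB Require Import structures.
From mathcomp Require Import all_boot all_order all_algebra.
From mathcomp Require Import all_classical all_reals all_analysis.
Set Implicit Arguments. Unset Strict Implicit. Unset Printing Implicit Defensive.
Import Order.TTheory GRing.Theory Num.Theory.
Local Open Scope ring_scope.

(* Rounds are 0-indexed: round j here is time step i = j+1 of the paper.
   An adversary is a deterministic map from the history of previous answers
   (true = top, false = bot) to the next query f : X -> R.                   *)

Section Threshold.
Variable R : realType.
Variable X : Type.

Definition lap_pdf (b y : R) : R := (2 * b)^-1 * expR (- `|y| / b).

Definition scons (y : R) (v : nat -> R) : nat -> R :=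
  fun i => if i is i'.+1 then v i' else y.

(* Probability, over i.i.d. v_0, ..., v_{n-1} ~ Lap(b), of the event P (which
   only depends on the first n coordinates), as an iterated Lebesgue integral. *)
Fixpoint iprob (b : R) (n : nat) (P : (nat -> R) -> bool) : \bar R :=
  match n with
  | 0 => ((P (fun _ => 0))%:R)%:E
  | n'.+1 => (\int[@lebesgue_measure R]_(y in [set: R])
                ((lap_pdf b y)%:E * iprob b n' (fun v => P (scons y v))))%E
  end.

(* f(D) = sum_{x in D} f(x), databases are finite multisets (seq X) *)
Definition qeval (f : X -> R) (D : seq X) : R := \sum_(x <- D) f x.

Definition bv (eps delta : R) : R := eps^-1 * ln (delta^-1).
Definition Delta (eps delta : R) : R := bv eps delta * ln (bv eps delta).

Variable A : seq bool -> X -> R.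

Definition tm_step (Dl t k w v : R) (st : seq X * (X -> R) * seq bool)
  : seq X * (X -> R) * seq bool :=
  let: (D, c, h) := st in
  let f := A h in
  if qeval f D + w + Num.min v Dl < t then (D, c, rcons h false)
  else let c' := fun x => c x + f x in
       (seq.filter (fun x => c' x < k) D, c', rcons h true).

Fixpoint tm_run (eps delta t k : R) (S : seq X) (W V : nat -> R) (n : nat)
  : seq X * (X -> R) * seq bool :=
  match n with
  | 0 => (S, fun _ => 0, [::])
  | n'.+1 => tm_step (Delta eps delta) t k (W n') (V n')
                     (tm_run eps delta t k S W V n')
  end.

(* Pr[ B(T) = a | W ] : probability over the v_i only, the w_i being fixed to W;
   B(T) = a means the |a| answers of the interaction are exactly a. *)
Definition prB (eps delta t k : R) (T : seq X) (W : nat -> R) (a : seq bool)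
  : \bar R :=
  iprob (bv eps delta) (size a)
        (fun V => (tm_run eps delta t k T W V (size a)).2 == a).

(* Database and counters along the outcome vector a (execution on S). *)
Fixpoint traj (k : R) (S : seq X) (a : seq bool) (j : nat) : seq X * (X -> R) :=
  match j with
  | 0 => (S, fun _ => 0)
  | j'.+1 => let: (D, c) := traj k S a j' in
             if nth false a j'
             then let c' := fun x => c x + A (take j' a) x in
                  (seq.filter (fun x => c' x < k) D, c')
             else (D, c)
  end.

Definition query (a : seq bool) (j : nat) : X -> R := A (take j a).
Definition Dbefore k S a j : seq X := (traj k S a j).1.
Definition cafter k S a j : X -> R := (traj k S a j.+1).2.

Definition almost_top (eps delta t k : R) S (x' : X) a (W : nat -> R) j : bool :=
  [&& ~~ nth false a j, cafter k S a j x' < k &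
      t - 2 * Delta eps delta <= qeval (query a j) (Dbefore k S a j) + W j].

Definition special_almost_top (eps delta t k : R) S (x' : X) a (W : nat -> R) j
  : bool :=
  [&& ~~ nth false a j, cafter k S a j x' < k,
      t - query a j x' - Delta eps delta
        <= qeval (query a j) (Dbefore k S a j) + W j &
      qeval (query a j) (Dbefore k S a j) + W j < t - Delta eps delta].

Definition E1 eps delta t k S x' a W : Prop :=
  \sum_(j < size a | almost_top eps delta t k S x' a W j) query a j x'
    <= 15 * (k + 1) + 5 * ln (delta^-1).

Definition E2 eps delta t k S x' a W : Prop :=
  (count (special_almost_top eps delta t k S x' a W) (iota 0 (size a)))%:R
    <= 30 * (k + 1) + 10 * ln (delta^-1).

Definition E3 eps delta t k S x' a W : Prop :=
  E1 eps delta t k S x' a W /\ E2 eps delta t k S x' a W.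

(* j in I_top : a_j = top and j <= i*, i.e. no earlier round reached c(x') >= k *)
Definition in_Itop k S (x' : X) a j : bool :=
  nth false a j && all (fun j' => cafter k S a j' x' < k) (iota 0 j).

Definition Wshift k S (x' : X) a (W : nat -> R) : nat -> R :=
  fun j => if in_Itop k S x' a j then W j - query a j x' else W j.

End Threshold.

(* Main.v *)
Require Import Defs.
From HB Require Import structures.
From mathcomp Require Import all_boot all_order all_algebra.
From mathcomp Require Import all_classical all_reals all_analysis.
From mathcomp Require Import ring lra measurable_realfun.
Import Order.TTheory GRing.Theory Num.Theory.
Import numFieldTopology.Exports.
Local Open Scope ring_scope.
Local Open Scope classical_set_scope.
Local Open Scope ring_scope.

Section Prob.
Variable R : realType.
Variable b : R.
Hypothesis b0 : 0 < b.

Notation pdf := (@lap_pdf R b).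
Notation mu := (@lebesgue_measure R).

Lemma pdf_ge0 y : 0 <= pdf y.
Proof. by rewrite /lap_pdf mulr_ge0 ?expR_ge0 // invr_ge0 mulr_ge0 // ltW. Qed.

Lemma pdf_cont : continuous (fun y : R => pdf y).
Proof.
move=> x; rewrite /lap_pdf.
apply: (@continuousM _ R^o (fun=> _) (fun y => expR (- `|y| / b))).
  exact: cst_continuous.
apply: continuous_comp; last exact: continuous_expR.
apply: (@continuousM _ R^o (fun y => - `|y|) (fun=> b^-1)); last exact: cst_continuous.
apply: (@continuousN _ R^o).
exact: (@norm_continuous _ R^o).
Qed.

Lemma pdf_meas : measurable_fun setT pdf.
Proof. exact: continuous_measurable_fun pdf_cont. Qed.

Definition prb (g : R -> bool) : \bar R :=
  (\int[mu]_(y in [set: R]) ((pdf y)%:E * ((g y)%:R)%:E))%E.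

Lemma meas_integrand (g : R -> bool) : measurable_fun setT g ->
  measurable_fun setT (fun y => ((pdf y)%:E * ((g y)%:R)%:E)%E).
Proof.
move=> mg.
apply/measurable_EFinP.
rewrite (_ : (fun x => _) = (fun y => pdf y * (if g y then 1 else 0))); last first.
  by apply/funext => y /=; case: (g y).
apply: measurable_funM; first exact: pdf_meas.
by apply: measurable_fun_ifT => //.
Qed.

Lemma prb_ge0 g : (0 <= prb g)%E.
Proof.
by apply: integral_ge0 => y _; rewrite mule_ge0 // lee_fin ?pdf_ge0 ?ler0n.
Qed.

Lemma iprob_ge0 n P : (0 <= iprob b n P)%E.
Proof.
elim: n P => [|n IH] P /=; first by rewrite lee_fin ler0n.
by apply: integral_ge0 => y _; rewrite mule_ge0 // lee_fin pdf_ge0.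
Qed.

Lemma iprob_false n : iprob b n (fun _ => false) = 0%E.
Proof.
elim: n => [|n IH] //=.
by apply: integral0_eq => y _; rewrite IH mule0.
Qed.

Lemma iprob_andl n (c : bool) Q :
  iprob b n (fun v => c && Q v) = ((c%:R)%:E * iprob b n Q)%E.
Proof. by case: c; rewrite ?mul1e ?mul0e // iprob_false. Qed.

Lemma iprob_all n (g : nat -> R -> bool) :
  measurable_fun setT (g 0%N) ->
  iprob b n.+1 (fun V => all (fun j => g j (V j)) (iota 0 n.+1)) =
  (prb (g 0%N) * iprob b n (fun V => all (fun j => g j.+1 (V j)) (iota 0 n)))%E.
Proof.
move=> mg /=.
rewrite /prb -ge0_integralZr //; last 3 first.
- exact: meas_integrand.
- by move=> y _; rewrite mule_ge0 // lee_fin ?pdf_ge0 ?ler0n.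
- exact: iprob_ge0.
apply: eq_integral => y _.
rewrite -muleA -iprob_andl; congr (_ * iprob _ _ _)%E.
apply/funext => v /=; congr (_ && _).
by rewrite -[1%N]addn0 iotaDl all_map; apply: eq_all => j.
Qed.

Lemma iprob_cmp n (g1 g2 : nat -> R -> bool) (C : nat -> R) :
  (forall j, measurable_fun setT (g1 j)) ->
  (forall j, measurable_fun setT (g2 j)) ->
  (forall j, 0 <= C j) ->
  (forall j, (j < n)%N -> (prb (g1 j) <= (C j)%:E * prb (g2 j))%E) ->
  (iprob b n (fun V => all (fun j => g1 j (V j)) (iota 0 n)) <=
   (\prod_(0 <= j < n) C j)%:E * iprob b n (fun V => all (fun j => g2 j (V j)) (iota 0 n)))%E.
Proof.
elim: n g1 g2 C => [|n IH] g1 g2 C m1 m2 C0 H.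
  by rewrite big_geq // mul1e.
rewrite !iprob_all // big_nat_recl // EFinM.
rewrite -muleA (muleCA _ (prb _)) muleA.
apply: lee_pmul.
- exact: prb_ge0.
- exact: iprob_ge0.
- exact: H.
- apply: (IH (fun j => g1 j.+1) (fun j => g2 j.+1) (fun j => C j.+1)) => // j jn.
  exact: H.
Qed.

End Prob.

Section Tail.
Variable R : realType.
Notation mu := (@lebesgue_measure R).
Variable rate : R.
Hypothesis rate0 : 0 < rate.

Let cexpNM : continuous (fun z : R^o => expR (- rate * z)).
Proof.
move=> z; apply: continuous_comp; last exact: continuous_expR.
by apply: continuousM => //; apply: (@continuousN _ R^o); exact: cst_continuous.
Qed.

Lemma tail_exp s : 0 <= s ->
  (\int[mu]_(x in `[s, +oo[) (exponential_pdf rate x)%:E = (expR (- rate * s))%:E)%E.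
Proof.
move=> s0.
rewrite (@ge0_continuous_FTC2y _ _ (fun x => - (expR (- rate * x))) _ 0)//.
- by rewrite -EFinB sub0r opprK.
- by move=> x _; apply: exponential_pdf_ge0; exact: ltW.
- apply: (@continuous_subspaceW R^o _ _ [set` `[0, +oo[%R]).
    by move=> x /=; rewrite !in_itv /= !andbT => /(le_trans s0).
  exact: within_continuous_exponential_pdf.
- rewrite -oppr0; apply: cvgN.
  rewrite (_ : (fun x => expR (- rate * x)) =
               (fun z => expR (- z)) \o (fun z => rate * z)); last first.
    by apply: eq_fun => x; rewrite mulNr.
  apply: (@cvg_comp _ _ _ _ _ _ (pinfty_nbhs R)); last exact: cvgr_expR.
  exact: gt0_cvgMry.
- by apply: cvgN; apply/cvg_at_right_filter; exact: cexpNM.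
- move=> x; rewrite in_itv /= andbT => sx.
  by apply: derive1_exponential_pdf; rewrite in_itv /= andbT (le_lt_trans s0).
Qed.

End Tail.

Section Lap.
Variable R : realType.
Variable b : R.
Hypothesis b0 : 0 < b.
Notation pdf := (@lap_pdf R b).
Notation mu := (@lebesgue_measure R).

Lemma pdf_ge0' y : 0 <= pdf y.
Proof. by rewrite /lap_pdf mulr_ge0 ?expR_ge0 // invr_ge0 mulr_ge0 // ltW. Qed.

Lemma pdf_cont' : continuous (fun y : R => pdf y).
Proof.
move=> x; rewrite /lap_pdf.
apply: (@continuousM _ R^o (fun=> _) (fun y => expR (- `|y| / b))).
  exact: cst_continuous.
apply: continuous_comp; last exact: continuous_expR.
apply: (@continuousM _ R^o (fun y => - `|y|) (fun=> b^-1)); last exact: cst_continuous.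
apply: (@continuousN _ R^o).
exact: (@norm_continuous _ R^o).
Qed.

Lemma pdf_meas' (D : set R) : measurable_fun D pdf.
Proof. apply: measurable_funTS; exact: continuous_measurable_fun pdf_cont'. Qed.

Lemma pdf_expE x : 0 <= x -> pdf x = 2^-1 * exponential_pdf b^-1 x.
Proof.
move=> x0; rewrite exponential_pdfE //. rewrite /lap_pdf (ger0_norm x0).
rewrite invfM -mulrA; congr (_ * _); rewrite mulrC.
by rewrite [RHS]mulrC !mulNr (mulrC x).
Qed.

Lemma lap_tail s : 0 <= s ->
  (\int[mu]_(x in `[s, +oo[) (pdf x)%:E = (expR (- s / b) / 2)%:E)%E.
Proof.
move=> s0.
rewrite (@eq_integral _ _ _ mu _ (fun x => (2^-1)%:E * (exponential_pdf b^-1 x)%:E)%E); last first.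
  move=> x; rewrite inE /= in_itv /= andbT => sx.
  by rewrite pdf_expE ?(le_trans s0) // EFinM.
rewrite ge0_integralZl_EFin //.
- rewrite tail_exp ?invr_gt0 // -EFinM mulrC; congr (EFin (expR _ * _)).
  by rewrite !mulNr mulrC.
- by move=> x _; rewrite lee_fin exponential_pdf_ge0 // invr_ge0 ltW.
- apply/measurable_EFinP/measurable_funTS.
  by apply: measurable_exponential_pdf; rewrite invr_ge0 ltW.
Qed.

Lemma lap_left s : s <= 0 ->
  (\int[mu]_(x in `]-oo, s[) (pdf x)%:E = (expR (s / b) / 2)%:E)%E.
Proof.
move=> s0.
rewrite integral_itv_bndo_bndc; last by apply/measurable_EFinP; exact: pdf_meas'.
rewrite -[s]opprK ge0_integration_by_substitutionNy; last 2 first.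
- exact/continuous_subspaceT/pdf_cont'.
- by move=> x _; exact: pdf_ge0'.
rewrite (@eq_integral _ _ _ mu _ (fun x => (pdf x)%:E)); last first.
  by move=> x _; rewrite /= /lap_pdf normrN.
by rewrite lap_tail ?oppr_ge0 // opprK.
Qed.

Lemma lap_split s :
  (\int[mu]_(x in [set: R]) (pdf x)%:E =
   \int[mu]_(x in `]-oo, s[) (pdf x)%:E + \int[mu]_(x in `[s, +oo[) (pdf x)%:E)%E.
Proof.
rewrite -(setUv `]-oo, s[%classic) ge0_integral_setU //=; last 4 first.
- exact: measurableC.
- by apply/measurable_EFinP; exact: pdf_meas'.
- by move=> x _; rewrite lee_fin pdf_ge0'.
- exact/disj_setPCl.
by rewrite setCitvl.
Qed.

Lemma lap_total : (\int[mu]_(x in [set: R]) (pdf x)%:E = 1)%E.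
Proof.
rewrite (lap_split 0) lap_left // lap_tail // -EFinD mul0r expR0.
by rewrite oppr0 mul0r expR0; congr EFin; lra.
Qed.

Lemma lap_right s : 0 <= s ->
  (\int[mu]_(x in `]-oo, s[) (pdf x)%:E = (1 - expR (- s / b) / 2)%:E)%E.
Proof.
move=> s0; have := lap_split s; rewrite lap_total lap_tail //.
have : (0 <= \int[mu]_(x in `]-oo, s[) (pdf x)%:E)%E.
  by apply: integral_ge0 => x _; rewrite lee_fin pdf_ge0'.
case: (\int[mu]_(x in `]-oo, s[) (pdf x)%:E)%E => // r _.
rewrite -EFinD => -[H]; congr EFin; lra.
Qed.

End Lap.

Section Cdf.
Variable R : realType.
Variable b : R.
Hypothesis b0 : 0 < b.
Notation pdf := (@lap_pdf R b).
Notation mu := (@lebesgue_measure R).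
Notation prb := (@prb R b).

Lemma prb_lt s : prb (fun y => y < s) = (\int[mu]_(x in `]-oo, s[) (pdf x)%:E)%E.
Proof.
rewrite [RHS]integral_mkcond /prb; apply: eq_integral => y _.
rewrite patchE; case: ifPn => [/set_mem /=|Hn].
  by rewrite in_itv /= => ->; rewrite mule1.
have -> : (y < s) = false.
  apply/negbTE; apply: contra Hn => ys; apply: mem_set; by rewrite /= in_itv /= ys.
by rewrite mule0.
Qed.

Lemma prb_true : prb (fun _ => true) = 1%E.
Proof.
rewrite /prb -[RHS](@lap_total R b b0); apply: eq_integral => y _.
by rewrite mule1.
Qed.

Lemma prb_lt_neg s : s <= 0 -> prb (fun y => y < s) = (expR (s / b) / 2)%:E.
Proof. by move=> s0; rewrite prb_lt (@lap_left R b b0). Qed.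

Lemma prb_lt_pos s : 0 <= s -> prb (fun y => y < s) = (1 - expR (- s / b) / 2)%:E.
Proof. by move=> s0; rewrite prb_lt (@lap_right R b b0). Qed.

Lemma prb_le (g1 g2 : R -> bool) : measurable_fun setT g1 -> measurable_fun setT g2 ->
  (forall y, g1 y -> g2 y) -> (prb g1 <= prb g2)%E.
Proof.
move=> m1 m2 H; apply: ge0_le_integral => //.
- by move=> y _; rewrite mule_ge0 // lee_fin ?pdf_ge0 ?ler0n.
- exact: meas_integrand.
- exact: meas_integrand.
move=> y _; rewrite lee_wpmul2l ?lee_fin ?pdf_ge0 //.
by case E: (g1 y); [rewrite (H _ E)|rewrite ler0n].
Qed.

Lemma prb_le1 g : measurable_fun setT g -> (prb g <= 1)%E.
Proof. by move=> m; rewrite -prb_true; apply: prb_le. Qed.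

End Cdf.
Section RealIneq.
Variable R : realType.

Lemma ineq_a (p q : R) : 0 < p -> p * q = 1 -> 1 - q / 2 <= p / 2.
Proof.
move=> p0 pq.
have q0 : 0 <= q by rewrite -(pmulr_rge0 _ p0) pq.
have : 0 <= q * (p - 1) ^+ 2 by rewrite mulr_ge0 // sqr_ge0.
rewrite expr2; nra.
Qed.

Lemma ineq_b (p q : R) : 1 <= p -> 0 <= q -> q < 1 -> q * p < 1 ->
  1 - q / 2 <= p * (1 - q * p / 2).
Proof.
move=> p1 q0 q1 qp1.
have : 0 <= (p - 1) * (2 - q * p - q) by rewrite mulr_ge0 //; lra.
nra.
Qed.

Lemma ineq_c (y p e : R) : 0 < y -> 1 + y <= p -> y * p <= 1 -> e <= y * p ->
  1 <= p ^+ 2 * (1 - e / 2).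
Proof.
move=> y0 yp py1 ey.
have [q qdef] : exists q, q = 1 + y by exists (1 + y).
rewrite -qdef in yp.
have p0 : 0 < p by lra.
have h1 : p ^+ 2 * (1 - y * p / 2) <= p ^+ 2 * (1 - e / 2).
  by rewrite ler_wpM2l ?sqr_ge0 //; lra.
apply: le_trans h1.
have yq : y * q <= 1 by rewrite qdef; nra.
have w1 : y * p * p <= p by nra.
have w2 : y * p * q <= q by rewrite qdef; nra.
have w3 : y * q * q <= q by rewrite qdef; nra.
have fq : 1 <= q ^+ 2 * (1 - y * q / 2).
  have eq2 : q * q = 1 + y + y * q by rewrite qdef; ring.
  have w0 : 0 <= y * q by rewrite qdef; nra.
  have h2 : 0 <= (y * q) * (1 - y * q) by rewrite mulr_ge0 //; lra.
  have h3 : 0 <= y * (1 - y * q / 2) by rewrite mulr_ge0 //; lra.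
  rewrite expr2 eq2; nra.
have dif : 0 <= (p - q) * ((p + q) - y * (p * p + p * q + q * q) / 2).
  apply: mulr_ge0. lra.
  have -> : y * (p * p + p * q + q * q) = y * p * p + y * p * q + y * q * q by ring.
  lra.
apply: (le_trans fq).
rewrite !expr2; nra.
Qed.

End RealIneq.

Section PrbIneq.
Variable R : realType.
Variable b : R.
Hypothesis b0 : 0 < b.
Notation prb := (@prb R b).
Let plt_pos s (h : 0 <= s) := @prb_lt_pos R b b0 s h.
Let plt_neg s (h : s <= 0) := @prb_lt_neg R b b0 s h.

Lemma prb_shift s d : 0 <= d ->
  (prb (fun y => (y < s)%R) <= (expR (d / b))%:E * prb (fun y => (y < s - d)%R))%E.
Proof.
move=> d0.
have binv : 0 < b^-1 by rewrite invr_gt0.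
have [s0|s0] := leP s 0.
  rewrite !plt_neg //; last lra.
  rewrite -EFinM lee_fin mulrA -expRD.
  by rewrite mulrBl addrC subrK.
have [sd0|sd0] := leP (s - d) 0.
  rewrite (@plt_pos _ (ltW s0)) plt_neg // -EFinM lee_fin mulrA -expRD.
  have -> : d / b + (s - d) / b = s / b by rewrite mulrBl addrC subrK.
  apply: ineq_a; first exact: expR_gt0.
  by rewrite -expRD mulNr addrN expR0.
rewrite (@plt_pos _ (ltW s0)) plt_pos; last lra.
rewrite -EFinM lee_fin.
have -> : expR (- (s - d) / b) = expR (- s / b) * expR (d / b).
  by rewrite -expRD; congr expR; rewrite mulNr mulrBl opprB mulNr addrC.
apply: ineq_b.
- by rewrite -expR0 ler_expR mulr_ge0 // ltW.
- exact: expR_ge0.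
- by rewrite -expR0 ltr_expR mulNr oppr_lt0 mulr_gt0.
- rewrite -expRD -expR0 ltr_expR -mulrDl pmulr_llt0 //; lra.
Qed.

Lemma prb_special s : 1 <= b * ln b -> b * ln b - 1 <= s ->
  (1 <= (expR (2 / b))%:E * prb (fun y => (y < s)%R))%E.
Proof.
move=> HD hs.
have binv : 0 < b^-1 by rewrite invr_gt0.
rewrite plt_pos; last lra.
rewrite -EFinM lee_fin.
have -> : expR (2 / b) = expR b^-1 ^+ 2.
  by rewrite expr2 -expRD; congr expR; rewrite mulrC mulr_natr mulr2n.
have lb : b^-1 <= ln b.
  by rewrite -(ler_pM2l b0) divff ?gt_eqF.
have eb : expR (ln b) = b by rewrite lnK // posrE.
apply: (@ineq_c _ b^-1) => //.
- exact: expR_ge1Dx.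
- rewrite -(ler_pM2l b0) mulrA divff ?gt_eqF // mul1r mulr1 -[X in _ <= X]eb.
  by rewrite ler_expR.
- have -> : b^-1 * expR b^-1 = expR (- ln b + b^-1) by rewrite expRD expRN eb.
  rewrite ler_expR.
  have -> : - ln b + b^-1 = - (b * ln b - 1) / b.
    by field; rewrite gt_eqF.
  by rewrite !mulNr lerN2 ler_wpM2r // ltW.
Qed.

End PrbIneq.

Definition ev {R : realType} (Dl t u : R) (bit : bool) (y : R) : bool :=
  (u + Num.min y Dl < t) == ~~ bit.

Lemma ev_meas {R : realType} (Dl t u : R) bit : measurable_fun setT (ev Dl t u bit).
Proof.
have mf : measurable_fun setT (fun y : R => u + Num.min y Dl < t).
  apply: measurable_fun_ltr => //.
  apply: measurable_funD => //.
  exact: measurable_minr.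
rewrite (_ : ev Dl t u bit = fun y => if bit then ~~ (u + Num.min y Dl < t)
                                     else (u + Num.min y Dl < t)); last first.
  by apply/funext => y; rewrite /ev; case: bit; case: (_ < _).
by case: bit => //; exact: measurable_neg.
Qed.

Section Run.
Variables (R : realType) (X : Type) (A : seq bool -> X -> R).
Variables (eps delta t k : R) (a : seq bool).

Definition uT (T : seq X) (W : nat -> R) j :=
  qeval (query A a j) (traj A k T a j).1 + W j.

Definition evs T W (V : nat -> R) n :=
  all (fun j => ev (Delta eps delta) t (uT T W j) (nth false a j) (V j)) (iota 0 n).

Lemma run_char T W V n : (n <= size a)%N ->
  if evs T W V n
  then tm_run A eps delta t k T W V n = ((traj A k T a n).1, (traj A k T a n).2, take n a)
  else (tm_run A eps delta t k T W V n).2 != take n a.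
Proof.
elim: n => [|n IH] na; first by rewrite /evs /= take0.
have na' : (n < size a)%N by [].
have {IH} := IH (ltnW na').
rewrite /evs -addn1 iotaD all_cat /= add0n andbT addn1.
rewrite (take_nth false na').
case: (all _ (iota 0 n)) => /=.
  move=> ->.
  rewrite /tm_step /=.
  rewrite /uT /query.
  case E: (traj A k T a n) => [D c] /=.
  rewrite /ev.
  case: (nth false a n); case: (_ < t) => //=;
    by rewrite eqseq_rcons eqxx.
move=> Hne.
case E: (tm_run A eps delta t k T W V n) Hne => [[D c] h] /= Hne.
rewrite /tm_step; case: (_ < t) => /=; rewrite eqseq_rcons (negbTE Hne) //=;
  by case: ifP.
Qed.

Lemma prB_eq T W :
  prB A eps delta t k T W a = iprob (bv eps delta) (size a) (fun V => evs T W V (size a)).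
Proof.
rewrite /prB; congr iprob; apply/funext => V.
have := @run_char T W V (size a) (leqnn _); rewrite take_size.
case: (evs T W V (size a)) => [->|/negbTE //].
by rewrite /= eqxx.
Qed.

End Run.

Section Traj.
Variables (R : realType) (X : Type) (A : seq bool -> X -> R).
Variables (k : R) (S : seq X) (x' : X) (a : seq bool).
Hypothesis Hk : 0 < k.

Definition Pj j := all (fun j' => cafter A k S a j' x' < k) (iota 0 j).

Lemma PjS j : Pj j.+1 = Pj j && ((traj A k S a j.+1).2 x' < k).
Proof. by rewrite /Pj -[in LHS]addn1 iotaD all_cat /= andbT add0n. Qed.

Lemma traj2 T T' j : (traj A k T a j).2 = (traj A k T' a j).2.
Proof.
elim: j => [|j IH] //=.
case E1: (traj A k T a j) IH => [D c]; case E2: (traj A k T' a j) => [D' c'] /= ->.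
by case: (nth false a j).
Qed.

Lemma Pc j : Pj j -> (traj A k S a j).2 x' < k.
Proof.
case: j => [|j]; first by move=> _ /=.
by rewrite PjS => /andP[].
Qed.

Lemma traj_cons j : (traj A k (x' :: S) a j).1 =
  if Pj j then x' :: (traj A k S a j).1 else (traj A k S a j).1.
Proof.
elim: j => [|j IH] //.
rewrite PjS.
have c2 := traj2 (x' :: S) S j.
have pc := @Pc j.
rewrite /=.
case E1: (traj A k (x' :: S) a j) IH c2 => [D' c'];
  case E2: (traj A k S a j) pc => [D c] /= pc -> ->.
case: (nth false a j) => /=.
  by case: (Pj j) => //=; case: (_ < k).
by case P: (Pj j) => //=; rewrite pc.
Qed.

Lemma uT_cons W j : uT R X A k a (x' :: S) W j =
  uT R X A k a S W j + (if Pj j then query A a j x' else 0).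
Proof.
rewrite /uT traj_cons; case: (Pj j); last by rewrite addr0.
by rewrite /qeval big_cons; ring.
Qed.

Lemma Wshift_E W j : Wshift A k S x' a W j =
  if nth false a j && Pj j then W j - query A a j x' else W j.
Proof. by []. Qed.

End Traj.

Lemma sum_const_count {R : realType} (s : seq nat) (P : pred nat) (c : R) :
  \sum_(i <- s | P i) c = (count P s)%:R * c.
Proof.
elim: s => [|x s IH]; first by rewrite big_nil mul0r.
rewrite big_cons /= IH; case: (P x) => /=; last by rewrite add0n.
by rewrite natrD mulrDl mul1r.
Qed.

Lemma ev_top_incl {R : realType} (Dl t u u' y : R) :
  u <= u' -> ev Dl t u true y -> ev Dl t u' true y.
Proof. by rewrite /ev /= !eqbF_neg -!leNgt => ? ?; lra. Qed.

Lemma ev_bot_incl {R : realType} (Dl t u u' y : R) :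
  u' <= u -> ev Dl t u false y -> ev Dl t u' false y.
Proof. by rewrite /ev /= !eqb_id => ? ?; lra. Qed.

Lemma le_C {R : realType} {x y : \bar R} {K C : R} :
  (0 <= y)%E -> (x <= K%:E * y)%E -> K <= C -> (x <= C%:E * y)%E.
Proof.
move=> y0 h KC; apply: (le_trans h).
by apply: lee_wpmul2r => //; rewrite lee_fin.
Qed.

Arguments prb_ge0 {R b}.
Arguments prb_le {R b}.
Arguments prb_le1 {R b}.
Arguments prb_special {R b}.
Arguments prb_shift {R b}.
Arguments iprob_ge0 {R b}.
Arguments Pc {R X A k S x' a}.

Lemma lt_meas {R : realType} (s : R) : measurable_fun setT (fun y : R => y < s).
Proof. by apply: measurable_fun_ltr. Qed.

Theorem lemma3p7 (R : realType) (X : Type) (A : seq bool -> X -> R)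
  (eps delta t k : R) (S : seq X) (x' : X) (a : seq bool) (W : nat -> R)
  (HA : forall h x, 0 <= A h x <= 1)
  (Heps : 0 < eps) (Hdelta : 0 < delta < 1) (HDelta : 1 <= Delta eps delta)
  (Hk : 0 < k)
  (HE3 : E3 A eps delta t k S x' a W) :
  (prB A eps delta t k (x' :: S) (Wshift A k S x' a W) a
     <= prB A eps delta t k S W a
   /\ prB A eps delta t k S W a
     <= (expR (75 * (k + 1) * eps / ln (delta^-1) + 25 * eps))%:E
        * prB A eps delta t k (x' :: S) W a)%E.
Proof.
have L0 : 0 < ln delta^-1.
  case/andP: Hdelta => d0 d1; apply: ln_gt0; by rewrite invf_gt1.
have b0 : 0 < bv eps delta by rewrite /bv mulr_gt0 // invr_gt0.
have HA0 h x : 0 <= A h x by case/andP: (HA h x).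
have HA1 h x : A h x <= 1 by case/andP: (HA h x).
rewrite !prB_eq /evs.
split.
  apply: le_trans (@iprob_cmp R (bv eps delta) b0 (size a)
    (fun j => ev (Delta eps delta) t (uT R X A k a (x' :: S) (Wshift A k S x' a W) j) (nth false a j))
    (fun j => ev (Delta eps delta) t (uT R X A k a S W j) (nth false a j))
    (fun _ => 1) _ _ _ _) _.
  - by move=> j; exact: ev_meas.
  - by move=> j; exact: ev_meas.
  - by [].
  - move=> j _; rewrite mul1e; apply: prb_le => //; try exact: ev_meas.
    move=> y; rewrite uT_cons // /uT Wshift_E.
    have := HA0 (take j a) x'; rewrite -/(query A a j x') => d0.
    case: (nth false a j); case: (Pj R X A k S x' a j) => /=.
    + by apply: ev_top_incl; lra.
    + by apply: ev_top_incl; lra.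
    + by apply: ev_bot_incl; lra.
    + by apply: ev_bot_incl; lra.
  by rewrite big1 // mul1e.
set b := bv eps delta.
set Dl := Delta eps delta.
have DlE : Dl = b * ln b by [].
have HD1 : 1 <= Dl by [].
set AT := almost_top A eps delta t k S x' a W.
set SP := special_almost_top A eps delta t k S x' a W.
pose C j := (if AT j then expR (query A a j x' / b) else 1) *
            (if SP j then expR (2 / b) else 1).
have binv : 0 < b^-1 by rewrite invr_gt0.
have e2 : 1 <= expR (2 / b) by rewrite -expR0 ler_expR divr_ge0 // ltW.
have e1 j : 1 <= expR (query A a j x' / b).
  by rewrite -expR0 ler_expR; apply: divr_ge0; [exact: HA0 | exact: ltW].
have C1 j : 1 <= C j.
  by rewrite /C; have := e1 j; case: (AT j); case: (SP j); nra.
have CAT j : AT j -> expR (query A a j x' / b) <= C j.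
  by rewrite /C => ->; have := e1 j; case: (SP j); nra.
have CSP j : SP j -> expR (2 / b) <= C j.
  by rewrite /C => ->; have := e1 j; case: (AT j); nra.
apply: le_trans (@iprob_cmp R b b0 (size a)
    (fun j => ev Dl t (uT R X A k a S W j) (nth false a j))
    (fun j => ev Dl t (uT R X A k a (x' :: S) W j) (nth false a j))
    C _ _ _ _) _.
- by move=> j; exact: ev_meas.
- by move=> j; exact: ev_meas.
- by move=> j; apply: le_trans (C1 j).
- move=> j _.
  rewrite uT_cons //.
  set u := uT R X A k a S W j.
  have := HA0 (take j a) x'; have := HA1 (take j a) x'.
  rewrite -/(query A a j x'); set d := query A a j x' => d1 d0.
  case Hb: (nth false a j).
    apply: (le_C (prb_ge0 b0 _) _ (C1 j)); rewrite mul1e.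
    apply: prb_le => //; try exact: ev_meas.
    by move=> y; apply: ev_top_incl; case: (Pj _ _ _ _ _ _ _ _); lra.
  case HP: (Pj R X A k S x' a j); last first.
    apply: (le_C (prb_ge0 b0 _) _ (C1 j)); rewrite mul1e.
    apply: prb_le => //; try exact: ev_meas.
    by move=> y; apply: ev_bot_incl; lra.
  have cak : cafter A k S a j x' < k.
    have := Pc Hk _ HP; rewrite /cafter /=.
    by case: (traj A k S a j) => D c; rewrite Hb.
  have [h1|h1] := ltP (u + d + Dl) t.
    apply: (le_C (prb_ge0 b0 _) _ (C1 j)); rewrite mul1e.
    apply: prb_le => //; try exact: ev_meas.
    move=> y _; rewrite /ev eqb_id.
    have : Num.min y Dl <= Dl by rewrite ge_min lexx orbT.
    lra.
  have [h2|h2] := ltP u (t - Dl).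
    have SPj : SP j.
      rewrite /SP /special_almost_top Hb cak /=.
      rewrite /Dbefore -/(uT R X A k a S W j) -/u -/d -/Dl.
      by apply/andP; split; lra.
    apply: (le_C (prb_ge0 b0 _) _ (CSP j SPj)).
    apply: le_trans (prb_le1 b0 _ (ev_meas _ _ _ _)) _.
    have hs : b * ln b - 1 <= t - u - d by rewrite -DlE; lra.
    apply: le_trans (prb_special b0 _ HDelta hs) _.
    apply: lee_wpmul2l; first by rewrite lee_fin expR_ge0.
    apply: prb_le => //; [exact: lt_meas | exact: ev_meas |].
    move=> y hy; rewrite /ev eqb_id.
    have : Num.min y Dl <= y by rewrite ge_min lexx.
    lra.
  have ATj : AT j.
    rewrite /AT /almost_top Hb cak /=.
    rewrite /Dbefore -/(uT R X A k a S W j) -/u -/d -/Dl.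
    lra.
  apply: (le_C (prb_ge0 b0 _) _ (CAT j ATj)).
  apply: le_trans (prb_le b0 _ _ (ev_meas _ _ _ _) (lt_meas (t - u)) _) _.
    move=> y; rewrite /ev eqb_id => h; rewrite ltNge; apply/negP => hy.
    have : t - u <= Num.min y Dl by rewrite le_min hy /=; lra.
    lra.
  apply: le_trans (prb_shift b0 (t - u) _ d0) _.
  apply: lee_wpmul2l; first by rewrite lee_fin expR_ge0.
  apply: prb_le => //; [exact: lt_meas | exact: ev_meas |].
  move=> y hy; rewrite /ev eqb_id.
  have : Num.min y Dl <= y by rewrite ge_min lexx.
  lra.
apply: lee_wpmul2r; first exact: iprob_ge0.
rewrite lee_fin.
case: HE3; rewrite /E1 /E2 -/AT -/SP => hE1 hE2.
rewrite /C big_split /= -!big_mkcond -!expR_sum -expRD ler_expR.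
rewrite -mulr_suml big_mkord sum_const_count /index_iota subn0.
set S1 := \sum_(j < size a | AT j) query A a j x'.
set cnt := (count SP (iota 0 (size a)))%:R.
set L := ln delta^-1.
set io := eps / L.
have io0 : 0 < io by rewrite /io divr_gt0.
have bE : b^-1 = io by rewrite /b /bv invfM invrK.
have Lio : L * io = eps by rewrite /io mulrCA divff ?mulr1 // gt_eqF.
rewrite bE.
have h1 : S1 * io <= (15 * (k + 1) + 5 * L) * io by rewrite ler_wpM2r // ltW.
have h2 : cnt * io <= (30 * (k + 1) + 10 * L) * io by rewrite ler_wpM2r // ltW.
have -> : 75 * (k + 1) * eps / L = 75 * (k + 1) * io by rewrite /io mulrA.
have -> : 25 * eps = 25 * (L * io) by rewrite Lio.
nra.
Qed.
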